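(* Let $n$ be a nonnegative integer and let $x,y$ be complex numbers such that no denominator below vanishes. Then \[ \sum_{k=0}^{n}(-1)^k\binom{n}{k} \frac{\binom{\frac{x}{2}+k}{k}\binom{x-\frac{1}{2}+k}{k}\binom{y+k}{k}} {\binom{\frac{x-1}{2}+k}{k}\binom{x-\frac{1}{2}+n+k}{k}\binom{x-y-\frac{1}{2}+k}{k}} \frac{1+2x+4k}{1+2x+2n+2k}H_{2k}(x) =\frac{1}{2}\frac{\binom{x-\frac{1}{2}+n}{n}\binom{\frac{x-3}{2}-y+n}{n}} {\binom{\frac{x-1}{2}+n}{n}\binom{x-y-\frac{1}{2}+n}{n}} \big\{H_n(\tfrac{x-1}{2})-H_n(\tfrac{x-3}{2}-y)\big\}. \]
   Context: For complex $z$ and a nonnegative integer $k$, $\binom{z}{k}=\frac{z(z-1)\cdots(z-k+1)}{k!}$ (with $\binom{z}{0}=1$). For complex $x$ and nonnegative integer $m$, $H_0(x)=0$ and $H_m(x)=\sum_{j=1}^m\frac{1}{x+j}$ for $m\ge1$. The parameters are assumed to be such that all denominators are nonzero. *)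

(* Defs.v *)
From mathcomp Require Import all_boot all_order all_algebra.
Set Implicit Arguments. Unset Strict Implicit. Unset Printing Implicit Defensive.
Import Order.TTheory GRing.Theory Num.Theory.
Local Open Scope ring_scope.

Definition cbinom (F : fieldType) (z : F) (k : nat) : F :=
  (\prod_(i < k) (z - i%:R)) / (k`!)%:R.

Definition charm (F : fieldType) (m : nat) (x : F) : F :=
  \sum_(1 <= j < m.+1) (x + j%:R)^-1.

(* Main.v *)
Require Import Defs.
From mathcomp Require Import all_boot all_order all_algebra.
From mathcomp Require Import ring zify.
Import Order.TTheory GRing.Theory Num.Theory.
Local Open Scope ring_scope.

Section Basics.
Variable R : numFieldType.
Implicit Types (a b c z : R).

Definition poch (z : R) (k : nat) : R := \prod_(i < k) (z + i%:R).

Lemma poch0 z : poch z 0 = 1.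
Proof. by rewrite /poch big_ord0. Qed.

Lemma pochS z k : poch z k.+1 = poch z k * (z + k%:R).
Proof. by rewrite /poch big_ord_recr. Qed.

Lemma poch_shift z k : poch z k.+1 = z * poch (z + 1) k.
Proof.
rewrite /poch big_ord_recl addr0; congr (_ * _); apply: eq_bigr => i _.
by rewrite /= -nat1r addrA.
Qed.

Lemma neq0_eq {E E' : R} : E' != 0 -> E = E' -> E != 0.
Proof. by move=> h ->. Qed.

Lemma poch_neq0 z k : (forall i, (i < k)%N -> z + i%:R != 0) -> poch z k != 0.
Proof. by move=> h; apply/prodf_neq0 => i _; apply: h. Qed.

Lemma poch_neq0_inv z k i : poch z k != 0 -> (i < k)%N -> z + i%:R != 0.
Proof.
move=> h hi; move/prodf_neq0: h => /(_ (Ordinal hi) isT) //.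
Qed.

Lemma cbinomP z w k : w = z + 1 -> cbinom (z + k%:R) k = poch w k / (k`!)%:R.
Proof.
move=> ->; rewrite /cbinom; congr (_ / _).
elim: k => [|k IH]; first by rewrite big_ord0 poch0.
rewrite big_ord_recl pochS -IH subr0 mulrC; congr (_ * _).
  by apply: eq_bigr => i _; rewrite lift0; ring.
by ring.
Qed.


Ltac nz := first [ done | match goal with
 | H : is_true (?E' != _) |- is_true (?E != _) => apply: (neq0_eq H); ring
 end ].

Ltac fin := repeat (apply/andP; split); do ?nz.

Lemma nat_neq0 (k : nat) : (k.+1)%:R != 0 :> R.
Proof. by rewrite pnatr_eq0. Qed.

Lemma binS_R n j : ('C(n.+1, j.+1))%:R = (n.+1)%:R * ('C(n, j))%:R / (j.+1)%:R :> R.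
Proof.
have h := congr1 (fun t : nat => t%:R : R) (mul_bin_diag n.+1 j).
rewrite /= !natrM in h; have hj := nat_neq0 j.
rewrite h; field; fin.
Qed.

Lemma binS_R2 n j : (j <= n)%N ->
  ('C(n, j.+1))%:R = (n%:R - j%:R) * ('C(n, j))%:R / (j.+1)%:R :> R.
Proof.
move=> hj.
have h := congr1 (fun t : nat => t%:R : R) (mul_bin_left n j).
rewrite /= !natrM natrB // in h; have hj1 := nat_neq0 j.
rewrite -h; field; fin.
Qed.

Definition Ft n k a b c :=
  (-1) ^+ k * ('C(n, k))%:R *
  (poch c k * poch a k * poch b k /
   (poch (1 + a - c) k * poch (a + n%:R) k * poch (1 + a - b) k)) *
  ((a + 2%:R * k%:R) / (a + n%:R + k%:R)).

Definition Kf n j a b c :=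
  poch a j.+1 * poch (b + 1) j * poch (c + 1) j * ((-1) ^+ j * ('C(n, j))%:R) /
  (poch (1 + a - b + 1) j * poch (1 + a - c + 1) j * poch (a + n.+1%:R + 1) j).

Definition Hyp n a b c : Prop :=
 [/\ forall i, (i <= n)%N -> a + n%:R + i%:R != 0,
     forall i, (i < n)%N -> 1 + a - c + i%:R != 0,
     forall i, (i < n)%N -> 1 + a - b + i%:R != 0,
     forall i, (i < n)%N -> c + i%:R != 0 &
     forall i, (i < n)%N -> 1 + a - b - c + i%:R != 0].

Lemma atoms_neq0 n j a b c : Hyp n.+1 a b c -> (j <= n)%N ->
  [/\ poch (1 + a - b + 1) j != 0, poch (1 + a - c + 1) j != 0 &
      poch (a + n.+1%:R + 1) j != 0].
Proof.
case=> H1 H2 H3 H4 H5 hj; split; apply: poch_neq0 => i hi.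
- have := H3 i.+1 (leq_trans hi hj); move=> h; nz.
- have := H2 i.+1 (leq_trans hi hj); move=> h; nz.
- have := H1 i.+1 (leq_trans hi (leqW hj)); move=> h; nz.
Qed.

Lemma E1 n j a b c : Hyp n.+1 a b c -> (j <= n)%N ->
  Ft n.+1 j.+1 a b c = Kf n j a b c *
   (- ((n.+1)%:R / (j.+1)%:R) * b * c * (a + 2%:R * (j.+1)%:R) /
    ((1 + a - c) * (a + n.+1%:R) * (1 + a - b) * (a + n.+1%:R + (j.+1)%:R))).
Proof.
move=> hH hj; have [p1 p2 p3] := @atoms_neq0 n j a b c hH hj.
case: hH => H1 H2 H3 H4 H5.
have h1 := H1 0%N isT. have h2 := H2 0%N isT. have h3 := H3 0%N isT.
have h4 := H1 j.+1 hj. have h5 := nat_neq0 j.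
rewrite /Ft /Kf binS_R exprS (poch_shift c) (poch_shift b) (poch_shift (1 + a - c))
  (poch_shift (a + _)) (poch_shift (1 + a - b)).
field; fin.
Qed.


Definition gam n a b c :=
  a * (a + 1) * (1 + a - b - c + n%:R) / ((a + n.+1%:R) * (1 + a - b) * (1 + a - c)).
Definition r1 n j a b c :=
  - ((n.+1)%:R / (j.+1)%:R) * b * c * (a + 2%:R * (j.+1)%:R) /
    ((1 + a - c) * (a + n.+1%:R) * (1 + a - b) * (a + n.+1%:R + (j.+1)%:R)).
Definition r2 n j a b c :=
  (a + (j.+1)%:R) * (1 + a - b - c + n%:R) * (a + 2%:R + 2%:R * j%:R) /
  ((a + n.+1%:R) * (1 + a - b) * (1 + a - c) * (a + n.+1%:R + 1 + j%:R)).
Definition r3 n j a b c :=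
  ((j.+1)%:R + a + n.+1%:R) * ((j.+1)%:R + a - b) * ((j.+1)%:R + a - c) /
  ((a + n.+1%:R + 1 + j%:R) * (a + n.+1%:R) * (1 + a - b) * (1 + a - c)).
Definition r4 n j a b c :=
  (a + (j.+1)%:R) * (b + 1 + j%:R) * (c + 1 + j%:R) * (j%:R - n%:R) /
  ((j.+1)%:R * (a + n.+1%:R) * (1 + a - b) * (1 + a - c) * (a + n.+1%:R + 1 + j%:R)).
Definition Vf n j a b c := Kf n j a b c * r3 n j a b c.

Lemma pa2 a j : a * (a + 1) * poch (a + 2%:R) j = poch a j.+1 * (a + (j.+1)%:R).
Proof.
rewrite -pochS !poch_shift (_ : a + 1 + 1 = a + 2%:R); last by ring.
by ring.
Qed.

Lemma E2 n j a b c : Hyp n.+1 a b c -> (j <= n)%N ->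
  gam n a b c * Ft n j (a + 2%:R) (b + 1) (c + 1) = Kf n j a b c * r2 n j a b c.
Proof.
move=> hH hj; have [p1 p2 p3] := @atoms_neq0 n j a b c hH hj.
case: hH => H1 H2 H3 H4 H5.
have h1 := H1 0%N isT. have h2 := H2 0%N isT. have h3 := H3 0%N isT.
have h4 := H1 j.+1 hj. have h5 := nat_neq0 j.
rewrite /Ft (_ : 1 + (a + 2%:R) - (c + 1) = 1 + a - c + 1); last by ring.
rewrite (_ : 1 + (a + 2%:R) - (b + 1) = 1 + a - b + 1); last by ring.
rewrite (_ : a + 2%:R + n%:R = a + n.+1%:R + 1); last by ring.
transitivity (a * (a + 1) * poch (a + 2%:R) j *
  (poch (b + 1) j * poch (c + 1) j * ((-1) ^+ j * ('C(n, j))%:R) /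
  (poch (1 + a - b + 1) j * poch (1 + a - c + 1) j * poch (a + n.+1%:R + 1) j) *
  ((1 + a - b - c + n%:R) * (a + 2%:R + 2%:R * j%:R) /
  ((a + n.+1%:R) * (1 + a - b) * (1 + a - c) * (a + n.+1%:R + 1 + j%:R))))).
  rewrite /gam; field; fin.
rewrite pa2 /Kf /r2; field; fin.
Qed.

Lemma E4 n j a b c : Hyp n.+1 a b c -> (j <= n)%N ->
  Vf n j.+1 a b c = Kf n j a b c * r4 n j a b c.
Proof.
move=> hH hj; case: (ltnP j n) => hjn; last first.
  have -> : j = n by apply/eqP; rewrite eqn_leq hj hjn.
  by rewrite /Vf /Kf /r4 bin_small // !(mul0r, mulr0, subrr).
have [p1 p2 p3] := @atoms_neq0 n j a b c hH hj.
case: hH => H1 H2 H3 H4 H5.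
have h1 := H1 0%N isT. have h2 := H2 0%N isT. have h3 := H3 0%N isT.
have h4 := H1 j.+1 hj. have h5 := nat_neq0 j.
have h6 := H1 j.+2 hjn. have h7 := H3 j.+1 hjn. have h8 := H2 j.+1 hjn.
rewrite /Vf /Kf /r3 /r4 (pochS a j.+1) (pochS (b + 1)) (pochS (c + 1))
  (pochS (1 + a - b + 1)) (pochS (1 + a - c + 1)) (pochS (_ + _ + 1)) exprS binS_R2 //.
field; fin.
Qed.

Lemma R2id n j a b c : Hyp n.+1 a b c -> (j <= n)%N ->
  r1 n j a b c - r2 n j a b c = r4 n j a b c - r3 n j a b c.
Proof.
case=> H1 H2 H3 H4 H5 hj.
have h1 := H1 0%N isT. have h2 := H2 0%N isT. have h3 := H3 0%N isT.
have h4 := H1 j.+1 hj. have h5 := nat_neq0 j.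
rewrite /r1 /r2 /r3 /r4; field; fin.
Qed.


Lemma E0 n a b c : Hyp n.+1 a b c -> Ft n.+1 0 a b c = Vf n 0 a b c.
Proof.
case=> H1 H2 H3 H4 H5.
have h1 := H1 0%N isT. have h2 := H2 0%N isT. have h3 := H3 0%N isT.
have h4 := H1 1%N isT.
rewrite /Ft /Vf /Kf /r3 !poch0 (pochS a 0) poch0 !bin0 !expr0 !mul1r !mulr1 !invr1 !mulr1 !addr0 mulr0 addr0. field; fin.
Qed.

Lemma Vtop n a b c : Vf n n.+1 a b c = 0.
Proof. by rewrite /Vf /Kf bin_small // !(mul0r, mulr0). Qed.

Lemma FtS n j a b c : Hyp n.+1 a b c -> (j <= n)%N ->
  Ft n.+1 j.+1 a b c = gam n a b c * Ft n j (a + 2%:R) (b + 1) (c + 1)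
    + (Vf n j.+1 a b c - Vf n j a b c).
Proof.
move=> hH hj.
rewrite E1 // E2 // E4 // /Vf -/(r1 n j a b c).
rewrite (_ : r1 n j a b c = r2 n j a b c + (r4 n j a b c - r3 n j a b c)).
  by ring.
by rewrite -R2id //; ring.
Qed.

Definition hf a c (i : nat) := (2%:R * (1 + a - c + i%:R))^-1 + (2%:R * (c + i%:R))^-1.
Definition wf a c (i : nat) := (1 + a - c + i%:R)^-1 + c^-1.
Definition Wf n j a b c := Vf n j a b c * wf a c j.
Definition kap n a b c := (1 + a - b - c + n%:R)^-1 + c^-1.

Lemma R3 n j a b c : Hyp n.+1 a b c -> (j < n)%N ->
  2%:R * Vf n j.+1 a b c * hf a c j.+1 =
  Wf n j.+1 a b c - Wf n j a b c + kap n a b c * (gam n a b c * Ft n j (a + 2%:R) (b + 1) (c + 1)).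
Proof.
move=> hH hjn; have hj := ltnW hjn.
rewrite /Wf E4 // E2 // /Vf.
case: hH => H1 H2 H3 H4 H5.
have h1 := H1 0%N isT. have h2 := H2 0%N isT. have h3 := H3 0%N isT.
have h4 := H1 j.+1 hj. have h5 := nat_neq0 j. have h0 := H4 0%N isT.
have h6 := H2 j hj. have h7 := H2 j.+1 hjn. have h8 := H4 j.+1 hjn.
have h9 := H5 n (leqnn _).
rewrite /r2 /r3 /r4 /wf /hf /kap; field; fin.
Qed.

Lemma R3top n a b c : Hyp n.+1 a b c ->
  Wf n n a b c = kap n a b c * (gam n a b c * Ft n n (a + 2%:R) (b + 1) (c + 1)).
Proof.
move=> hH; rewrite /Wf E2 // /Vf.
case: hH => H1 H2 H3 H4 H5.
have h1 := H1 0%N isT. have h2 := H2 0%N isT. have h3 := H3 0%N isT.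
have h4 := H1 n.+1 (leqnn _). have h0 := H4 0%N isT.
have h6 := H2 n (leqnn _). have h9 := H5 n (leqnn _).
rewrite /r2 /r3 /wf /kap; field; fin.
Qed.

Lemma R3zero n a b c : Hyp n.+1 a b c ->
  2%:R * Vf n 0 a b c * hf a c 0 = Wf n 0 a b c.
Proof.
case=> H1 H2 H3 H4 H5.
have h2 := H2 0%N isT. have h0 := H4 0%N isT.
rewrite /Wf /wf /hf; field; fin.
Qed.


Definition hh a c k := \sum_(i < k) hf a c i.
Definition Ssum n a b c := \sum_(0 <= k < n.+1) Ft n k a b c.
Definition Hsum n a b c := \sum_(0 <= k < n.+1) Ft n k a b c * hh a c k.
Definition cstF n a b c :=
  poch a n * poch (1 + a - b - c) n / (poch (1 + a - b) n * poch (1 + a - c) n).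
Definition GF n a b c :=
  \sum_(i < n) (1 + a - c + i%:R)^-1 - \sum_(i < n) (1 + a - b - c + i%:R)^-1.

Lemma hh0 a c : hh a c 0 = 0.
Proof. by rewrite /hh big_ord0. Qed.

Lemma hhS a c k : hh a c k.+1 = hh a c k + hf a c k.
Proof. by rewrite /hh big_ord_recr. Qed.

Lemma hh_shift a c k : hh a c k.+1 = hf a c 0 + hh (a + 2%:R) (c + 1) k.
Proof.
rewrite /hh big_ord_recl; congr (_ + _); apply: eq_bigr => i _.
rewrite lift0 /hf; congr (_^-1 + _^-1); ring.
Qed.

Lemma GF_shift n a b c : GF n.+1 a b c =
  GF n (a + 2%:R) (b + 1) (c + 1) + (1 + a - c)^-1 - (1 + a - b - c + n%:R)^-1.
Proof.
rewrite /GF big_ord_recl big_ord_recr /=.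
have -> : \sum_(i < n) (1 + a - c + (lift ord0 i)%:R)^-1 =
          \sum_(i < n) (1 + (a + 2%:R) - (c + 1) + i%:R)^-1.
  by apply: eq_bigr => i _; rewrite lift0; congr (_^-1); ring.
have -> : \sum_(i < n) (1 + (a + 2%:R) - (b + 1) - (c + 1) + i%:R)^-1 =
          \sum_(i < n) (1 + a - b - c + i%:R)^-1.
  by apply: eq_bigr => i _; congr (_^-1); ring.
rewrite addr0; ring.
Qed.

Lemma Hyp_shift n a b c : Hyp n.+1 a b c -> Hyp n (a + 2%:R) (b + 1) (c + 1).
Proof.
case=> H1 H2 H3 H4 H5; split=> i hi.
- have h := H1 i.+1 hi; nz.
- have h := H2 i.+1 hi; nz.
- have h := H3 i.+1 hi; nz.
- have h := H4 i.+1 hi; nz.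
- have h := H5 i (ltnW hi); nz.
Qed.

Lemma cst_shift n a b c : Hyp n.+1 a b c ->
  cstF n.+1 a b c = gam n a b c * cstF n (a + 2%:R) (b + 1) (c + 1).
Proof.
move=> hH; have [p1 p2 p3] := @atoms_neq0 n n a b c hH (leqnn _).
case: hH => H1 H2 H3 H4 H5.
have h1 := H1 0%N isT. have h2 := H2 0%N isT. have h3 := H3 0%N isT.
rewrite /cstF /gam (_ : 1 + (a + 2%:R) - (c + 1) = 1 + a - c + 1); last by ring.
rewrite (_ : 1 + (a + 2%:R) - (b + 1) - (c + 1) = 1 + a - b - c); last by ring.
rewrite (_ : 1 + (a + 2%:R) - (b + 1) = 1 + a - b + 1); last by ring.
transitivity (a * (a + 1) * poch (a + 2%:R) n *
  (poch (1 + a - b - c) n * (1 + a - b - c + n%:R) /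
   ((1 + a - b) * poch (1 + a - b + 1) n * ((1 + a - c) * poch (1 + a - c + 1) n) *
    (a + n.+1%:R)))); last by field; fin.
rewrite pa2 (pochS (1 + a - b - c)) (poch_shift (1 + a - b)) (poch_shift (1 + a - c)); field; fin.
Qed.

Lemma sum_step n a b c : Hyp n.+1 a b c ->
  Ssum n.+1 a b c = gam n a b c * Ssum n (a + 2%:R) (b + 1) (c + 1).
Proof.
move=> hH; rewrite /Ssum big_nat_recl // E0 //.
rewrite (eq_big_nat _ _ (F2 := fun j => gam n a b c * Ft n j (a + 2%:R) (b + 1) (c + 1)
    + (Vf n j.+1 a b c - Vf n j a b c))); last first.
  by move=> j /andP[_ hj]; rewrite FtS.
rewrite big_split /= telescope_sumr // Vtop -mulr_sumr; ring.
Qed.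


Lemma VH n a b c : Hyp n.+1 a b c ->
  2%:R * \sum_(0 <= j < n.+1) (Vf n j a b c * hf a c j) =
  kap n a b c * gam n a b c * Ssum n (a + 2%:R) (b + 1) (c + 1).
Proof.
move=> hH; rewrite mulr_sumr big_nat_recl // mulrA R3zero //.
rewrite (eq_big_nat _ _ (F2 := fun j => (Wf n j.+1 a b c - Wf n j a b c) +
   kap n a b c * (gam n a b c * Ft n j (a + 2%:R) (b + 1) (c + 1)))); last first.
  by move=> j /andP[_ hj]; rewrite mulrA R3.
rewrite big_split /= telescope_sumr // -mulr_sumr -mulr_sumr.
rewrite /Ssum big_nat_recr //= R3top //; ring.
Qed.

Lemma hsum_step n a b c : Hyp n.+1 a b c ->
  Hsum n.+1 a b c = gam n a b c * (hf a c 0 * Ssum n (a + 2%:R) (b + 1) (c + 1)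
     + Hsum n (a + 2%:R) (b + 1) (c + 1))
   - 2%:R^-1 * (kap n a b c * gam n a b c * Ssum n (a + 2%:R) (b + 1) (c + 1)).
Proof.
move=> hH; rewrite -VH // mulrA mulVf ?pnatr_eq0 // mul1r.
rewrite /Hsum big_nat_recl // hh0 mulr0 add0r.
rewrite (eq_big_nat _ _ (F2 := fun j =>
    gam n a b c * (hf a c 0 * Ft n j (a + 2%:R) (b + 1) (c + 1) +
       Ft n j (a + 2%:R) (b + 1) (c + 1) * hh (a + 2%:R) (c + 1) j)
    + ((Vf n j.+1 a b c * hh a c j.+1 - Vf n j a b c * hh a c j)
       - Vf n j a b c * hf a c j))); last first.
  move=> j /andP[_ hj]; rewrite FtS // mulrDl {1}hh_shift hhS; ring.
have tel : \sum_(0 <= i < n.+1) ((Vf n i.+1 a b c * hh a c i.+1 - Vf n i a b c * hh a c i)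
     - Vf n i a b c * hf a c i) = - \sum_(0 <= i < n.+1) (Vf n i a b c * hf a c i).
  by rewrite sumrB telescope_sumr // Vtop hh0 mul0r mulr0 subrr add0r.
rewrite big_split /= tel -mulr_sumr big_split /= -mulr_sumr /Ssum; ring.
Qed.


Lemma main n : forall a b c, Hyp n a b c ->
  Ssum n a b c = cstF n a b c /\ Hsum n a b c = 2%:R^-1 * cstF n a b c * GF n a b c.
Proof.
elim: n => [|n IH] a b c hH.
  case: hH => H1 _ _ _ _; have h1 := H1 0%N isT.
  rewrite /Ssum /Hsum /cstF /GF !big_nat1 !big_ord0 hh0 !poch0 /Ft !poch0 bin0 expr0.
  split; last by rewrite mulr0 subrr mulr0.
  rewrite !mul1r !invr1 ?mulr1 ?mul1r mulr0 !addr0 divff //.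
  by rewrite !addr0 in h1.
have hH' := @Hyp_shift n a b c hH; have [IH1 IH2] := IH _ _ _ hH'.
split; first by rewrite sum_step // IH1 cst_shift.
rewrite hsum_step // IH1 IH2 cst_shift // GF_shift.
case: hH => H1 H2 H3 H4 H5.
have h2 := H2 0%N isT. have h0 := H4 0%N isT. have h9 := H5 n (leqnn _).
rewrite /hf /kap; field; fin.
Qed.


Lemma half_neq (u v : R) : v = 2%:R * u -> v != 0 -> u != 0.
Proof. by move=> -> h; apply: contraNneq h => ->; rewrite mulr0. Qed.

Lemma cb_neq z w k : cbinom (z + k%:R) k != 0 -> w = z + 1 -> poch w k != 0.
Proof.
move=> h e; apply: contraNneq h => E; by rewrite (cbinomP z w k e) E mul0r.
Qed.

Lemma charm_hh (x : R) k :
  charm (2 * k) x = hh (x + 2%:R^-1) (x / 2%:R + 1) k.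
Proof.
elim: k => [|k IH]; first by rewrite muln0 hh0 /charm big_geq.
rewrite mulnS !addSn add0n /charm big_nat_recr // big_nat_recr //= -/(charm _ _) IH hhS.
rewrite /hf -addrA; congr (_ + (_ + _)); congr (_^-1); field. all: done.
Qed.


Lemma charm_shift (z w : R) n : w = z + 1 -> charm n z = \sum_(i < n) (w + i%:R)^-1.
Proof.
move=> e; rewrite /charm big_add1 /= big_mkord; apply: eq_bigr => i _.
by rewrite e; congr (_^-1); ring.
Qed.

End Basics.

Arguments poch {R}. Arguments Ft {R}. Arguments Hyp {R}. Arguments hh {R}.
Arguments hf {R}. Arguments Hsum {R}. Arguments Ssum {R}. Arguments cstF {R}.
Arguments GF {R}. Arguments main {R}. Arguments half_neq {R}.
Arguments neq0_eq {R E E'}. Arguments cb_neq {R}. Arguments poch_neq0_inv {R}.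
Arguments cbinomP {R}. Arguments charm_hh {R}. Arguments charm_shift {R}.

Ltac nz2 := first [ done | match goal with
 | H : is_true (?E' != _) |- is_true (?E != _) => apply: (neq0_eq H); ring
 end ].
Ltac fin2 := repeat (apply/andP; split); do ?nz2.
Theorem theorem6 (C : numClosedFieldType) (n : nat) (x y : C)
  (* all denominators on the left-hand side are nonzero *)
  (hden : forall k : nat, (k <= n)%N ->
     [/\ cbinom ((x - 1) / 2%:R + k%:R) k != 0,
         cbinom (x - 2%:R^-1 + n%:R + k%:R) k != 0,
         cbinom (x - y - 2%:R^-1 + k%:R) k != 0,
         1 + 2%:R * x + 2%:R * n%:R + 2%:R * k%:R != 0 &
         forall j : nat, (1 <= j <= 2 * k)%N -> x + j%:R != 0])
  (* all denominators on the right-hand side are nonzero *)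
  (hd1 : cbinom ((x - 1) / 2%:R + n%:R) n != 0)
  (hd2 : cbinom (x - y - 2%:R^-1 + n%:R) n != 0)
  (hd3 : forall j : nat, (1 <= j <= n)%N -> (x - 1) / 2%:R + j%:R != 0)
  (hd4 : forall j : nat, (1 <= j <= n)%N -> (x - 3%:R) / 2%:R - y + j%:R != 0) :
  \sum_(0 <= k < n.+1)
     (-1) ^+ k * ('C(n, k))%:R *
     ((cbinom (x / 2%:R + k%:R) k * cbinom (x - 2%:R^-1 + k%:R) k
        * cbinom (y + k%:R) k)
      / (cbinom ((x - 1) / 2%:R + k%:R) k * cbinom (x - 2%:R^-1 + n%:R + k%:R) k
         * cbinom (x - y - 2%:R^-1 + k%:R) k))
     * ((1 + 2%:R * x + 4%:R * k%:R) / (1 + 2%:R * x + 2%:R * n%:R + 2%:R * k%:R))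
     * charm (2 * k) x
  = 2%:R^-1 *
    ((cbinom (x - 2%:R^-1 + n%:R) n * cbinom ((x - 3%:R) / 2%:R - y + n%:R) n)
     / (cbinom ((x - 1) / 2%:R + n%:R) n * cbinom (x - y - 2%:R^-1 + n%:R) n))
    * (charm n ((x - 1) / 2%:R) - charm n ((x - 3%:R) / 2%:R - y)).
Proof.
pose a := x + 2%:R^-1. pose b := y + 1. pose c := x / 2%:R + 1.
have hH : Hyp n a b c.
  split => i hi.
  - have [_ _ _ h _] := hden i hi; apply: (half_neq _ _ _ h); rewrite /a; field; done.
  - have h := hd3 i.+1 hi; apply: (neq0_eq h); rewrite /a /c; field; done.
  - have h := @cb_neq _ (x - y - 2%:R^-1) (1 + a - b) n hd2.
    apply: (poch_neq0_inv _ _ _ (h _)) => //; rewrite /a /b; field; done.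
  - have [_ _ _ _ h] := hden n (leqnn n).
    have h2 : (1 <= (2 * i).+2 <= 2 * n)%N by apply/andP; split; lia.
    have := h _ h2; apply: half_neq; rewrite /c; field; done.
  - have h := hd4 i.+1 hi; apply: (neq0_eq h); rewrite /a /b /c; field; done.
have [_ hmain] := main _ _ _ _ hH.
rewrite (eq_big_nat _ _ (F2 := fun k => Ft n k a b c * hh a c k)); last first.
  move=> k /andP[_ hk]; have [p1 p2 p3 p4 p5] := hden k hk.
  have q1 := @cb_neq _ ((x - 1) / 2%:R) (1 + a - c) k p1.
  have q2 := @cb_neq _ (x - 2%:R^-1 + n%:R) (a + n%:R) k p2.
  have q3 := @cb_neq _ (x - y - 2%:R^-1) (1 + a - b) k p3.
  have e1 : 1 + a - c = (x - 1) / 2%:R + 1 by rewrite /a /c; field; done.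
  have e2 : a + n%:R = x - 2%:R^-1 + n%:R + 1 by rewrite /a; field; done.
  have e3 : 1 + a - b = x - y - 2%:R^-1 + 1 by rewrite /a /b; field; done.
  have e4 : a = x - 2%:R^-1 + 1 by rewrite /a; field; done.
  move: (q1 e1) (q2 e2) (q3 e3) => {q1 q2 q3} q1 q2 q3.
  have hk' : (k <= n)%N by [].
  have q4 : a + n%:R + k%:R != 0 by case: hH => H1 _ _ _ _; apply: H1.
  have q5 : (k`!)%:R != 0 :> C by rewrite pnatr_eq0 -lt0n fact_gt0.
  rewrite charm_hh -/a -/c.
  rewrite (cbinomP (x / 2%:R) c k erefl) (cbinomP (x - 2%:R^-1) a k e4)
    (cbinomP y b k erefl) (cbinomP _ _ k e1) (cbinomP _ _ k e2) (cbinomP _ _ k e3).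
  rewrite /Ft; move: q1 q2 q3 q4 p4; rewrite /a /b /c => q1 q2 q3 q4 p4.
  field; fin2.
rewrite -/(Hsum n a b c) hmain.
have e1 : 1 + a - c = (x - 1) / 2%:R + 1 by rewrite /a /c; field; done.
have e3 : 1 + a - b = x - y - 2%:R^-1 + 1 by rewrite /a /b; field; done.
have e4 : a = x - 2%:R^-1 + 1 by rewrite /a; field; done.
have e5 : 1 + a - b - c = (x - 3%:R) / 2%:R - y + 1 by rewrite /a /b /c; field; done.
have q1 := @cb_neq _ ((x - 1) / 2%:R) (1 + a - c) n hd1 e1.
have q3 := @cb_neq _ (x - y - 2%:R^-1) (1 + a - b) n hd2 e3.
have q5 : (n`!)%:R != 0 :> C by rewrite pnatr_eq0 -lt0n fact_gt0.
rewrite (charm_shift _ _ n e1) (charm_shift _ _ n e5).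
rewrite (cbinomP _ _ n e4) (cbinomP _ _ n e5) (cbinomP _ _ n e1) (cbinomP _ _ n e3).
rewrite /cstF /GF; field; fin2.
Qed.
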